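(* Fix integers $n,d\in\mathbb{N}$, let $\mathcal{A}$ be either the Čech class or the Alpha class of convex sets in $\mathbb{R}^d$, and let $\mathcal{Q}$ be a probability distribution on $(\mathbb{R}^d)^n$. Every graph $\Gamma$ that is feasible (for $d$, $n$, $\mathcal{A}$, $\mathcal{Q}$) is isomorphic to $\mathcal{G}(\mathcal{V},r,\mathcal{A})$ for some collection $\mathcal{V}$ of $n$ points in the closed unit ball $\mathbb{B}^d\subset\mathbb{R}^d$ and $r=1/n$.
   Context: For a finite collection $F=\{A_j : j\in I\}$ of nonempty convex sets, its nerve is $\mathrm{Nrv}(F)=\{\sigma\subseteq I : \bigcap_{j\in\sigma}A_j\neq\varnothing\}$. For a finite point set $\mathcal{V}=\{v_1,\dots,v_n\}\subset\mathbb{R}^d$ and $r>0$, let $B_{v,r}=v+r\mathbb{B}^d$ be the closed ball of radius $r$ about $v$ and $C_v=\{x\in\mathbb{R}^d:\|x-v\|\le\|x-u\|\ \forall u\in\mathcal{V}\}$ the Voronoi cell of $v$. The Čech complex is the nerve of $\{B_{v,r}: v\in\mathcal{V}\}$; the Alpha complex is the nerve of $\{B_{v,r}\cap C_v : v\in\mathcal{V}\}$. The graph $\mathcal{G}(\mathcal{V},r,\mathcal{A})$ is the 1-skeleton of the corresponding complex: vertex set $\mathcal{V}$, with $\{v_i,v_j\}$ an edge iff the two sets associated with $v_i$ and $v_j$ intersect. Two graphs are isomorphic if there is a bijection of vertex sets preserving adjacency in both directions. Given $d,n$, a class $\mathcal{A}$, and a distribution $\mathcal{Q}$ of random vectors $\mathbf{V}=(V_1,\dots,V_n)$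 in $(\mathbb{R}^d)^n$, a graph $\Gamma$ is called feasible if for some $r>0$, $\Pr\{\mathcal{G}(\mathbf{V},r,\mathcal{A})\cong\Gamma\}>0$ when $\mathbf{V}\sim\mathcal{Q}$. *)

(* Defs.v *)
From HB Require Import structures.
From mathcomp Require Import all_boot all_order all_algebra.
From mathcomp Require Import all_classical all_reals all_analysis.
Set Implicit Arguments. Unset Strict Implicit. Unset Printing Implicit Defensive.
Import Order.TTheory GRing.Theory Num.Theory.
Local Open Scope ring_scope.
Local Open Scope classical_set_scope.

(* A point of R^d is a d-tuple of reals; a configuration (V_1,...,V_n) is an
   n-tuple of points.  n.-tuple T carries mathcomp-analysis' product
   sigma-algebra (generated by the coordinate maps), which for R^d is the
   Borel sigma-algebra. *)
Definition point (R : realType) (d : nat) := d.-tuple R.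
Definition config (R : realType) (d n : nat) := n.-tuple (d.-tuple R).

Definition sqdist (R : realType) (d : nat) (x y : d.-tuple R) : R :=
  \sum_(k < d) (tnth x k - tnth y k) ^+ 2.
Definition enorm (R : realType) (d : nat) (x : d.-tuple R) : R :=
  Num.sqrt (\sum_(k < d) (tnth x k) ^+ 2).

Definition cball (R : realType) (d : nat) (v : d.-tuple R) (r : R) : set (d.-tuple R) :=
  [set x | Num.sqrt (sqdist x v) <= r].

Definition voronoi (R : realType) (d n : nat) (V : config R d n) (i : 'I_n)
  : set (d.-tuple R) :=
  [set x | forall j : 'I_n, Num.sqrt (sqdist x (tnth V i)) <= Num.sqrt (sqdist x (tnth V j))].

Inductive cclass := Cech | Alpha.

Definition cset (R : realType) (d n : nat) (A : cclass) (V : config R d n) (r : R)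
  (i : 'I_n) : set (d.-tuple R) :=
  match A with
  | Cech => cball (tnth V i) r
  | Alpha => cball (tnth V i) r `&` voronoi V i
  end.

(* 1-skeleton of the nerve: the graph G(V, r, A) on vertex set 'I_n
   (vertex i stands for the point V_i) *)
Definition nerve_adj (R : realType) (d n : nat) (A : cclass) (V : config R d n) (r : R)
  (i j : 'I_n) : Prop :=
  i <> j /\ cset A V r i `&` cset A V r j !=set0.

Definition nerve_iso (R : realType) (d n : nat) (A : cclass) (V : config R d n) (r : R)
  (T : finType) (e : rel T) : Prop :=
  exists f : 'I_n -> T, bijective f /\
    forall i j : 'I_n, nerve_adj A V r i j <-> e (f i) (f j).

Definition feasible (R : realType) (d n : nat) (A : cclass)
  (Q : probability (config R d n) R) (T : finType) (e : rel T) : Prop :=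
  exists r : R, 0 < r /\ (0 < Q [set V | nerve_iso A V r e])%E.

(* Main.v *)
Require Import Defs.
From HB Require Import structures.
From mathcomp Require Import all_boot all_order all_algebra.
From mathcomp Require Import all_classical all_reals all_analysis.
From mathcomp Require Import ring lra zify.
Set Implicit Arguments. Unset Strict Implicit. Unset Printing Implicit Defensive.
Import Order.TTheory GRing.Theory Num.Theory.
Local Open Scope ring_scope.
Local Open Scope classical_set_scope.

Section Norm.
Variables (R : realType) (d : nat).
Implicit Types (f g : 'I_d -> R).

Definition nrm f : R := Num.sqrt (\sum_k f k ^+ 2).

Lemma sumsq_ge0 f : 0 <= \sum_k f k ^+ 2.
Proof. by apply: sumr_ge0 => k _; exact: sqr_ge0. Qed.

Lemma nrm_ge0 f : 0 <= nrm f.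
Proof. exact: sqrtr_ge0. Qed.

Lemma CS f g : (\sum_k f k * g k) ^+ 2 <= (\sum_k f k ^+ 2) * (\sum_k g k ^+ 2).
Proof.
set A := \sum_k f k ^+ 2; set B := \sum_k g k ^+ 2; set C := \sum_k f k * g k.
have H0 : 0 <= \sum_k (B * f k - C * g k) ^+ 2 by apply: sumr_ge0 => k _; exact: sqr_ge0.
have HE : \sum_k (B * f k - C * g k) ^+ 2 = B * (B * A - C ^+ 2).
  rewrite (eq_bigr (fun k => B^+2 * f k ^+2 - 2 * B * C * (f k * g k) + C^+2 * g k ^+2)); last first.
    by move=> k _; ring.
  rewrite big_split /= big_split /= sumrN -!mulr_sumr /A /B /C -/A -/B -/C.
  ring.
have hB : 0 <= B by apply: sumsq_ge0.
have hA : 0 <= A by apply: sumsq_ge0.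
case: (ltrP 0 B) => hB0.
  rewrite HE in H0.
  have : 0 <= B * A - C ^+ 2 by rewrite -(pmulr_rge0 _ hB0).
  lra.
have B0 : B = 0 by apply/eqP; rewrite eq_le hB0 hB.
have g0 : forall k, g k = 0.
  move=> k; apply/eqP; rewrite -sqrf_eq0; apply/eqP.
  move/eqP: B0; rewrite psumr_eq0; last by move=> i _; exact: sqr_ge0.
  by move/allP/(_ k (mem_index_enum _))/implyP/(_ isT)/eqP.
have -> : C = 0 by rewrite /C big1 // => k _; rewrite g0 mulr0.
by rewrite expr0n /= mulr_ge0.
Qed.

Lemma nrm_tri f g : nrm (fun k => f k + g k) <= nrm f + nrm g.
Proof.
rewrite /nrm.
have hS : 0 <= Num.sqrt (\sum_k f k ^+ 2) + Num.sqrt (\sum_k g k ^+ 2) by rewrite addr_ge0 ?sqrtr_ge0.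
rewrite -(ger0_norm hS) -sqrtr_sqr ler_sqrt ?sqr_ge0 //.
rewrite sqrrD !sqr_sqrtr ?sumsq_ge0 //.
rewrite (eq_bigr (fun k => f k ^+ 2 + 2 * (f k * g k) + g k ^+ 2)); last by move=> k _; ring.
rewrite big_split big_split /= -mulr_sumr.
set A := \sum_k f k ^+ 2; set B := \sum_k g k ^+ 2; set C := \sum_k f k * g k.
have : C <= Num.sqrt A * Num.sqrt B.
  rewrite -sqrtrM ?sumsq_ge0 //.
  case: (lerP C 0) => hC; first by apply: le_trans hC (sqrtr_ge0 _).
  have : Num.sqrt (C ^+ 2) <= Num.sqrt (A * B) by rewrite ler_sqrt ?mulr_ge0 ?sumsq_ge0 // CS.
  by rewrite sqrtr_sqr ger0_norm //; apply: ltW.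
lra.
Qed.

Lemma nrm_scale (s : R) f : nrm (fun k => s * f k) = `|s| * nrm f.
Proof.
rewrite /nrm (eq_bigr (fun k => s ^+ 2 * f k ^+ 2)); last by move=> k _; rewrite exprMn.
by rewrite -mulr_sumr sqrtrM ?sqr_ge0 // sqrtr_sqr.
Qed.

Lemma nrm_ext f g : (forall k, f k = g k) -> nrm f = nrm g.
Proof. by move=> h; rewrite /nrm; apply: congr1; apply: eq_bigr => k _; rewrite h. Qed.

Lemma nrm_coord f k : `|f k| <= nrm f.
Proof.
rewrite /nrm -sqrtr_sqr ler_sqrt ?sumsq_ge0 // (bigD1 k) //= lerDl.
by apply: sumr_ge0 => i _; exact: sqr_ge0.
Qed.
End Norm.
Section Dist.
Variables (R : realType) (d : nat).
Implicit Types (x y z a b : d.-tuple R).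

Definition dist x y : R := Num.sqrt (sqdist x y).
Definition mkt (f : 'I_d -> R) : d.-tuple R := [tuple f k | k < d].
Lemma tnth_mkt f k : tnth (mkt f) k = f k.
Proof. by rewrite /mkt tnth_mktuple. Qed.

Lemma distE x y : dist x y = nrm (fun k => tnth x k - tnth y k).
Proof. by []. Qed.

Lemma dist_ge0 x y : 0 <= dist x y.
Proof. exact: sqrtr_ge0. Qed.

Lemma dist_scale a b x y (s : R) : 0 <= s ->
  (forall k, tnth a k - tnth b k = s * (tnth x k - tnth y k)) -> dist a b = s * dist x y.
Proof.
move=> hs h; rewrite !distE (nrm_ext (g := fun k => s * (tnth x k - tnth y k))) //.
by rewrite nrm_scale ger0_norm.
Qed.

Lemma dist_ext a b x y :
  (forall k, tnth a k - tnth b k = tnth x k - tnth y k) -> dist a b = dist x y.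
Proof. by move=> h; rewrite (@dist_scale _ _ x y 1) ?mul1r // => k; rewrite mul1r. Qed.


Lemma dist_sym x y : dist x y = dist y x.
Proof.
rewrite !distE (nrm_ext (g := fun k => (-1) * (tnth y k - tnth x k))) ?nrm_scale ?normrN ?normr1 ?mul1r //.
by move=> k; rewrite mulN1r opprB.
Qed.

Lemma dist_tri x y z : dist x z <= dist x y + dist y z.
Proof.
rewrite !distE (nrm_ext (g := fun k => (tnth x k - tnth y k) + (tnth y k - tnth z k))).
  exact: nrm_tri.
by move=> k; rewrite addrA subrK.
Qed.

Lemma dist_coord x y k : `|tnth x k - tnth y k| <= dist x y.
Proof. by rewrite distE; exact: (nrm_coord (fun k => tnth x k - tnth y k)). Qed.

Lemma merge (c1 c2 p q : d.-tuple R) (r1 r2 L : R) : 0 <= r1 -> 0 <= r2 -> 0 < L ->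
  dist p c1 <= r1 -> dist q c2 <= r2 -> dist p q <= L ->
  exists c, (forall x, dist x c1 <= r1 -> dist x c <= r1 + r2 + L / 2) /\
            (forall x, dist x c2 <= r2 -> dist x c <= r1 + r2 + L / 2).
Proof.
move=> h1 h2 hL hp hq hpq.
have hD : dist c1 c2 <= r1 + L + r2.
  have := dist_tri c1 p c2; have := dist_tri p q c2; rewrite (dist_sym c1 p).
  have := dist_ge0 p q; lra.
set D := dist c1 c2.
set S := r1 + r2 + L.
have hS : 0 < S by rewrite /S; lra.
set l := (r2 + L / 2) / S.
exists (mkt (fun k => tnth c1 k + l * (tnth c2 k - tnth c1 k))).
have e1 : dist (mkt (fun k => tnth c1 k + l * (tnth c2 k - tnth c1 k))) c1 = l * D.
  rewrite /D (dist_sym c1 c2); apply: dist_scale.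
    by rewrite /l divr_ge0 //; [lra | lra].
  by move=> k; rewrite tnth_mkt; ring.
have e2 : dist (mkt (fun k => tnth c1 k + l * (tnth c2 k - tnth c1 k))) c2 = (1 - l) * D.
  rewrite /D; apply: dist_scale.
    rewrite /l subr_ge0 ler_pdivrMr // mul1r /S; lra.
  by move=> k; rewrite tnth_mkt; ring.
have hD0 : 0 <= D by apply: dist_ge0.
have b1 : l * D <= r2 + L / 2.
  rewrite /l mulrAC ler_pdivrMr // ler_wpM2l //; rewrite /S /D; lra.
have b2 : (1 - l) * D <= r1 + L / 2.
  have -> : 1 - l = (r1 + L / 2) / S by rewrite /l /S; field; lra.
  rewrite mulrAC ler_pdivrMr // ler_wpM2l //; rewrite /S /D; lra.
split => x hx.
  have := dist_tri x c1 (mkt (fun k => tnth c1 k + l * (tnth c2 k - tnth c1 k))).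
  rewrite (dist_sym c1) e1; lra.
have := dist_tri x c2 (mkt (fun k => tnth c1 k + l * (tnth c2 k - tnth c1 k))).
rewrite (dist_sym c2) e2; lra.
Qed.
End Dist.
Section Transfer.
Variables (R : realType) (d n : nat).

Lemma transfer (A : cclass) (V W : config R d n) (r r' s : R) (Sm : 'I_n -> 'I_n -> Prop) :
  0 < s -> 0 < r -> r' = s * r ->
  (forall i j, Sm i j -> forall k, tnth (tnth W i) k - tnth (tnth W j) k =
                                  s * (tnth (tnth V i) k - tnth (tnth V j) k)) ->
  (forall i j, ~ Sm i j -> 2 * r < dist (tnth V i) (tnth V j) /\
                          2 * r' < dist (tnth W i) (tnth W j)) ->
  forall i j, nerve_adj A V r i j -> nerve_adj A W r' i j.
Proof.
move=> hs hr hr' hsame hfar i j [hij [x [hxi hxj]]].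
have hb : forall l, cset A V r l x -> dist x (tnth V l) <= r.
  by move=> l; case: A {hxi hxj} => //= -[].
have Hij : Sm i j.
  case: (pselect (Sm i j)) => // nH; exfalso.
  have [h1 _] := hfar i j nH.
  have := dist_tri (tnth V i) x (tnth V j); rewrite (dist_sym _ x).
  have := hb i hxi; have := hb j hxj; lra.
pose y := mkt (fun k => tnth (tnth W i) k + s * (tnth x k - tnth (tnth V i) k)).
have Hi : dist y (tnth W i) = s * dist x (tnth V i).
  by apply: dist_scale; [exact: ltW | move=> k; rewrite tnth_mkt; ring].
have Hsu : forall u, Sm i u -> dist y (tnth W u) = s * dist x (tnth V u).
  move=> u hu; apply: dist_scale; first exact: ltW.
  move=> k; rewrite tnth_mkt.
  have -> : tnth (tnth W i) k + s * (tnth x k - tnth (tnth V i) k) - tnth (tnth W u) k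
     = (tnth (tnth W i) k - tnth (tnth W u) k) + s * (tnth x k - tnth (tnth V i) k) by ring.
  rewrite hsame //; ring.
have Hsj : forall u, Sm j u -> dist y (tnth W u) = s * dist x (tnth V u).
  move=> u hu; apply: dist_scale; first exact: ltW.
  move=> k; rewrite tnth_mkt.
  have -> : tnth (tnth W i) k + s * (tnth x k - tnth (tnth V i) k) - tnth (tnth W u) k
     = (tnth (tnth W i) k - tnth (tnth W j) k) + (tnth (tnth W j) k - tnth (tnth W u) k)
       + s * (tnth x k - tnth (tnth V i) k) by ring.
  rewrite hsame // hsame //; ring.
have Hj := Hsu j Hij.
have ball : forall l, dist y (tnth W l) = s * dist x (tnth V l) -> dist x (tnth V l) <= r ->
   dist y (tnth W l) <= r'.
  by move=> l -> h; rewrite hr' ler_wpM2l //; exact: ltW.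
have vor : forall l, dist y (tnth W l) = s * dist x (tnth V l) -> dist x (tnth V l) <= r ->
   (forall u, Sm l u -> dist y (tnth W u) = s * dist x (tnth V u)) ->
   (forall u, dist x (tnth V l) <= dist x (tnth V u)) ->
   forall u, dist y (tnth W l) <= dist y (tnth W u).
  move=> l hl hlr hsl hv u.
  case: (pselect (Sm l u)) => hu.
    by rewrite hl hsl // ler_wpM2l //; exact: ltW.
  have [_ h2] := hfar l u hu.
  have := dist_tri (tnth W l) y (tnth W u); rewrite (dist_sym _ y).
  have := ball l hl hlr; lra.
split=> //; exists y.
case: A hb hxi hxj => /= hb hxi hxj.
  by split; [apply: ball Hi (hb i hxi) | apply: ball Hj (hb j hxj)].
case: hxi hxj => hxi hvi [hxj hvj].
split; split.
- exact: ball Hi hxi.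
- exact: (vor i Hi hxi Hsu hvi).
- exact: ball Hj hxj.
- exact: (vor j Hj hxj Hsj hvj).
Qed.
End Transfer.
Local Close Scope classical_set_scope.
Lemma cross (T : finType) (e : rel T) (S : {set T}) x y :
  connect e x y -> x \in S -> y \notin S -> exists a b, [/\ a \in S, b \notin S & e a b].
Proof.
move=> /connectP [p]; elim: p x => [|z p IH] x /=.
  by move=> _ -> h1 h2; rewrite h1 in h2.
case/andP => exz hp hy hx; case: (boolP (z \in S)) => hz.
  exact: IH hz.
by exists x, z.
Qed.

Lemma exists_argmax (R : realType) (T : finType) (S : {set T}) (f : T -> R) :
  S != finset.set0 -> exists2 p, p \in S & forall i, i \in S -> f i <= f p.
Proof.
case/set0Pn => i0 hi0.
case: (@arg_maxP _ R T i0 (mem S) f hi0) => p hp hmax.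
by exists p.
Qed.

Lemma dist_xx (R : realType) d (x : d.-tuple R) : dist x x = 0.
Proof. by rewrite (@dist_scale _ _ x x x x 0) ?mul0r // => k; rewrite subrr mul0r. Qed.

Section Comp.
Variables (R : realType) (d n : nat) (close : rel 'I_n) (P : 'I_n -> d.-tuple R) (L : R).
Hypothesis hsym : symmetric close.
Hypothesis hL : 0 < L.
Hypothesis hclose : forall a b, close a b -> dist (P a) (P b) <= L.

Lemma prefix i0 k : (k < #|[set j | connect close i0 j]|)%N ->
  exists S : {set 'I_n}, [/\ S \subset [set j | connect close i0 j], i0 \in S, #|S| = k.+1 &
     exists c, forall j, j \in S -> dist (P j) c <= k%:R * L / 2].
Proof.
set K := [set j | connect close i0 j].
elim: k => [|k IH] hk.
  exists [set i0]; split.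
  - by rewrite finset.sub1set inE connect0.
  - by rewrite inE.
  - by rewrite cards1.
  - by exists (P i0) => j; rewrite inE => /eqP ->; rewrite dist_xx mul0r mul0r.
have [S [hSK hi0 hcard [c hc]]] := IH (ltnW hk).
have : ~~ (K \subset S).
  apply/negP => hKS; have := subset_leq_card hKS; rewrite hcard; lia.
case/subsetPn => b0 hb0K hb0S.
have hb0 : connect close i0 b0 by move: hb0K; rewrite inE.
have [a [b [haS hbS hab]]] := cross hb0 hi0 hb0S.
have hbK : b \in K.
  have : a \in K by apply: (fintype.subsetP hSK).
  rewrite !inE => hia; apply: connect_trans hia _; exact: connect1.
have hk0 : 0 <= k%:R * L / 2 :> R by apply: divr_ge0 => //; apply: mulr_ge0 => //; exact: ltW.
have hbb : dist (P b) (P b) <= 0 by rewrite dist_xx.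
have [c' [h1 h2]] := merge hk0 (lexx 0) hL (hc a haS) hbb (hclose hab).
exists (b |: S); split.
- by rewrite finset.subUset finset.sub1set hbK hSK.
- by rewrite setU1r.
- by rewrite cardsU1 hbS hcard.
- exists c' => j; rewrite !inE => /orP [/eqP ->|hj].
  have := h2 (P b) hbb.
  have -> : (k.+1)%:R = k%:R + 1 :> R by rewrite mulrSr.
  lra.
have := h1 (P j) (hc j hj).
have -> : (k.+1)%:R = k%:R + 1 :> R by rewrite mulrSr.
lra.
Qed.
Lemma comp_center i0 : exists c, forall j, connect close i0 j ->
  dist (P j) c <= (#|[set j | connect close i0 j]|%:R - 1) * L / 2.
Proof.
set K := [set j | connect close i0 j].
have hK : (0 < #|K|)%N by apply/card_gt0P; exists i0; rewrite inE connect0.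
have hlt : (#|K|.-1 < #|K|)%N by rewrite (prednK hK).
have [S [hSK hi0 hc [c Hc]]] := @prefix i0 (#|K|.-1) hlt.
have SK : S = K by apply/eqP; rewrite eqEcard hSK hc (prednK hK) leqnn.
exists c => j hj; have hjS : j \in S by rewrite SK inE.
have := Hc j hjS.
have e : (#|K|%:R - 1 : R) = (#|K|.-1)%:R by rewrite -{1}(prednK hK) mulrSr addrK.
by rewrite e.
Qed.
End Comp.
Section Claim.
Variables (R : realType) (d' n : nat) (close : rel 'I_n) (P : 'I_n -> d'.+1.-tuple R) (L : R).
Hypothesis hsym : symmetric close.
Hypothesis hL : 0 < L.
Hypothesis hclose : forall a b, close a b -> dist (P a) (P b) <= L.

Definition Wt (tau : 'I_n -> 'I_d'.+1 -> R) i := mkt (fun k => tnth (P i) k + tau i k).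

Lemma claim m : forall S : {set 'I_n}, (#|S| <= m)%N ->
  (forall i j, i \in S -> connect close i j -> j \in S) -> S != finset.set0 ->
  exists tau c p, [/\ p \in S,
    (forall i j, i \in S -> j \in S -> connect close i j -> tau i = tau j),
    (forall i j, i \in S -> j \in S -> ~~ connect close i j -> L <= dist (Wt tau i) (Wt tau j)),
    (forall i, i \in S -> tnth (Wt tau i) ord0 <= tnth (Wt tau p) ord0) &
    (forall i, i \in S -> dist (Wt tau i) c <= (#|S|%:R - 1) * L / 2)].
Proof.
have csym := sym_connect_sym hsym.
elim: m => [|m IH] S hm hcl hne.
  by move: hne; rewrite -card_gt0; lia.
case/set0Pn: hne => i0 hi0.
set K := [set j | connect close i0 j].
have inK : forall j, (j \in K) = connect close i0 j by move=> j; rewrite inE.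
have hKS : K \subset S by apply/fintype.subsetP => j; rewrite inK; apply: hcl.
set S' := S :\: K.
have hS' : forall j, (j \in S') = (j \notin K) && (j \in S) by move=> j; rewrite inE.
have Kconn : forall i j, i \in K -> connect close i j -> j \in K.
  by move=> i j; rewrite !inK => h1 h2; apply: connect_trans h1 h2.
have Kconn' : forall i j, j \in K -> connect close i j -> i \in K.
  by move=> i j hj hij; apply: (Kconn j i hj); rewrite csym.
have hcardS : #|S| = (#|K| + #|S'|)%N.
  by rewrite -(cardsID K S) (finset.setIidPr hKS).
have hK0 : (0 < #|K|)%N by apply/card_gt0P; exists i0; rewrite inK connect0.
have hKne : K != finset.set0 by rewrite -card_gt0.
have [cK hcK] := comp_center hL hclose i0.
have [q hqK hq] := exists_argmax (fun i => - tnth (P i) ord0) hKne.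
have [pK hpK hpKm] := exists_argmax (fun i => tnth (P i) ord0) hKne.
have hrK : 0 <= (#|K|%:R - 1) * L / 2.
  apply: divr_ge0 => //; apply: mulr_ge0; last exact: ltW.
  by rewrite subr_ge0 ler1n.
case: (eqVneq S' finset.set0) => hS'0.
  have SK : S = K.
    apply/eqP; rewrite finset.eqEsubset hKS andbT; apply/fintype.subsetP => j hj.
    case: (boolP (j \in K)) => // hjK.
    have : j \in S' by rewrite hS' hjK hj.
    by rewrite hS'0 inE.
  exists (fun _ _ => 0), cK, pK; split.
  - by rewrite SK.
  - by [].
  - move=> i j; rewrite SK !inK => hi hj hn; exfalso; move/negP: hn; apply.
    by apply: connect_trans _ hj; rewrite csym.
  - by move=> i hi; rewrite !tnth_mkt !addr0; apply: hpKm; rewrite -SK.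
  - move=> i hi; rewrite SK.
    rewrite (@dist_ext _ _ _ _ (P i) cK); first by apply: hcK; rewrite -inK -SK.
    by move=> k; rewrite tnth_mkt addr0.
have hS'sub : (#|S'| <= m)%N by move: hm; rewrite hcardS; lia.
have hS'cl : forall i j, i \in S' -> connect close i j -> j \in S'.
  move=> i j; rewrite !hS' => /andP [hiK hiS] hij; rewrite (hcl i) // andbT.
  by apply/negP => hjK; move/negP: hiK; apply; apply: (Kconn' i j).
have [tau' [c' [p' [hp' ha' hb' hc' hd']]]] := IH S' hS'sub hS'cl hS'0.
pose t := fun k => tnth (Wt tau' p') k + (if k == ord0 then L else 0) - tnth (P q) k.
pose tau := fun i => if i \in K then t else tau' i.
have WK : forall i k, i \in K -> tnth (Wt tau i) k = tnth (P i) k + t k.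
  by move=> i k hi; rewrite tnth_mkt /tau hi.
have WS : forall i k, i \notin K -> tnth (Wt tau i) k = tnth (Wt tau' i) k.
  by move=> i k hi; rewrite !tnth_mkt /tau (negbTE hi).
have hx1 : forall i, i \in K -> tnth (Wt tau' p') ord0 + L <= tnth (Wt tau i) ord0.
  move=> i hi; rewrite WK // /t eqxx.
  have := hq i hi; lra.
have S'K : forall i, i \in S -> i \notin K -> i \in S' by move=> i h1 h2; rewrite hS' h1 h2.
have hS'0' : (0 < #|S'|)%N by rewrite card_gt0.
have hr1 : 0 <= (#|S'|%:R - 1) * L / 2.
  apply: divr_ge0 => //; apply: mulr_ge0; last exact: ltW.
  by rewrite subr_ge0 ler1n.
have hq2 : dist (Wt tau q) (mkt (fun k => tnth cK k + t k)) <= (#|K|%:R - 1) * L / 2.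
  rewrite (@dist_ext _ _ _ _ (P q) cK); first by apply: hcK; rewrite -inK.
  by move=> k; rewrite WK // tnth_mkt; ring.
have hpq : dist (Wt tau' p') (Wt tau q) <= L.
  rewrite /dist /sqdist (bigD1 ord0) //= big1; last first.
    move=> k hk; rewrite WK // /t (negbTE hk).
    have -> : tnth (Wt tau' p') k - (tnth (P q) k + (tnth (Wt tau' p') k + 0 - tnth (P q) k)) = 0 by ring.
    by rewrite expr0n.
  rewrite WK // /t eqxx.
  have -> : tnth (Wt tau' p') ord0 - (tnth (P q) ord0 + (tnth (Wt tau' p') ord0 + L - tnth (P q) ord0)) = - L by ring.
  by rewrite addr0 sqrrN sqrtr_sqr ger0_norm //; exact: ltW.
have [c [hc1 hc2]] := merge hr1 hrK hL (hd' p' hp') hq2 hpq.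
exists tau, c, pK; split.
- by apply: (fintype.subsetP hKS).
- move=> i j hi hj hij; case: (boolP (i \in K)) => hiK.
    have hjK : j \in K by apply: Kconn hiK hij.
    by rewrite /tau hiK hjK.
  have hjK : j \notin K by apply/negP => hjK; move/negP: hiK; apply; apply: Kconn' hjK hij.
  by rewrite /tau (negbTE hiK) (negbTE hjK); apply: ha' => //; apply: S'K.
- move=> i j hi hj hij.
  case: (boolP (i \in K)) => hiK; case: (boolP (j \in K)) => hjK.
  + exfalso; move/negP: hij; apply; apply: connect_trans (_ : connect close i i0) _.
      by rewrite csym -inK.
    by rewrite -inK.
  + have h1 := hx1 i hiK.
    have h2 := hc' j (S'K j hj hjK).
    have h3 := dist_coord (Wt tau i) (Wt tau j) ord0.
    rewrite (WS j ord0 hjK) in h3.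
    have h4 : tnth (Wt tau i) ord0 - tnth (Wt tau' j) ord0 <= `|tnth (Wt tau i) ord0 - tnth (Wt tau' j) ord0| by apply: ler_norm.
    lra.
  + have h1 := hx1 j hjK.
    have h2 := hc' i (S'K i hi hiK).
    have h3 := dist_coord (Wt tau j) (Wt tau i) ord0.
    rewrite (WS i ord0 hiK) dist_sym in h3.
    have h4 : tnth (Wt tau j) ord0 - tnth (Wt tau' i) ord0 <= `|tnth (Wt tau j) ord0 - tnth (Wt tau' i) ord0| by apply: ler_norm.
    lra.
  + rewrite (@dist_ext _ _ _ _ (Wt tau' i) (Wt tau' j)); first by apply: hb' => //; apply: S'K.
    by move=> k; rewrite !WS.
- move=> i hi; case: (boolP (i \in K)) => hiK.
    rewrite !WK // /t.
    have := hpKm i hiK; lra.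
  have h1 := hc' i (S'K i hi hiK).
  have h2 := hx1 pK hpK.
  rewrite (WS i ord0 hiK); apply: le_trans h1 _; apply: le_trans _ h2.
  by rewrite lerDl; exact: ltW.
- have hr : (#|S|%:R - 1) * L / 2 = (#|S'|%:R - 1) * L / 2 + (#|K|%:R - 1) * L / 2 + L / 2.
    rewrite hcardS natrD; ring.
  move=> i hi; rewrite hr; case: (boolP (i \in K)) => hiK.
    apply: hc2; rewrite (@dist_ext _ _ _ _ (P i) cK); first by apply: hcK; rewrite -inK.
    by move=> k; rewrite WK // tnth_mkt; ring.
  apply: hc1; rewrite (@dist_ext _ _ _ _ (Wt tau' i) c'); first by apply: hd'; apply: S'K.
  by move=> k; rewrite WS.
Qed.
End Claim.
Unset Implicit Arguments.
Local Open Scope classical_set_scope.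

Theorem mainTheorem1 (R : realType) (n d : nat) (A : cclass)
  (Q : probability (config R d n) R) (T : finType) (e : rel T) :
  feasible A Q e ->
  exists V : config R d n,
    (forall i : 'I_n, enorm (tnth V i) <= 1) /\
    nerve_iso A V (n%:R)^-1 e.
Proof.
move=> [r0 [hr0 hQ]].
have [V0 HV0] : exists V0 : config R d n, nerve_iso A V0 r0 e.
  case: (pselect (exists V0 : config R d n, nerve_iso A V0 r0 e)) => // nex.
  have E : [set V : config R d n | nerve_iso A V r0 e] = (set0 : set (config R d n)).
    apply/seteqP; split => V //= hV.
    by exfalso; apply: nex; exists V.
  by move: hQ; rewrite E measure0 ltxx.
case: HV0 => f [fbij fiff].
clear hQ; case: n => [|n'] in Q V0 f fbij fiff *.
  by exists V0; split; [case | exists f; split => // -[]].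
set r := (n'.+1%:R)^-1 : R.
have hr : 0 < r by rewrite invr_gt0 ltr0n.
case: d => [|d'] in Q V0 fiff *.
  exists V0; split.
    by move=> i; rewrite /enorm big_ord0 sqrtr0 ler01.
  exists f; split => // i j; rewrite -fiff; split.
    apply: (@transfer _ _ _ A V0 V0 r r0 (r0 / r) (fun _ _ => True)).
    - by rewrite divr_gt0.
    - by [].
    - by rewrite divfK // gt_eqF.
    - by move=> ? ? _ [].
    - by move=> ? ? [].
  apply: (@transfer _ _ _ A V0 V0 r0 r (r / r0) (fun _ _ => True)).
  - by rewrite divr_gt0.
  - by [].
  - by rewrite divfK // gt_eqF.
  - by move=> ? ? _ [].
  - by move=> ? ? [].
set s := r / r0.
have hs : 0 < s by rewrite divr_gt0.
pose P i := mkt (fun k => s * tnth (tnth V0 i) k).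
pose close := fun a b => dist (tnth V0 a) (tnth V0 b) <= 2 * r0.
set L := r * (2 + r).
have hL : 0 < L by rewrite mulr_gt0 //; lra.
have hsym : symmetric close by move=> a b; rewrite /close dist_sym.
have hsr : s * r0 = r by rewrite divfK // gt_eqF.
have hclose : forall a b, close a b -> dist (P a) (P b) <= L.
  move=> a b hab.
  rewrite (@dist_scale _ _ _ _ (tnth V0 a) (tnth V0 b) s); last first.
    by move=> k; rewrite !tnth_mkt; ring.
    exact: ltW.
  have : s * dist (tnth V0 a) (tnth V0 b) <= s * (2 * r0) by rewrite ler_wpM2l //; exact: ltW.
  have e2 : s * (2 * r0) = 2 * r by rewrite mulrCA hsr.
  rewrite e2 /L; nra.
have hcard : (#|[set: 'I_n'.+1]%SET| <= n'.+1)%N by rewrite cardsT card_ord.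
have hcl : forall i j, i \in [set: 'I_n'.+1]%SET -> connect close i j -> j \in [set: 'I_n'.+1]%SET.
  by move=> i j _ _; rewrite inE.
have hne : [set: 'I_n'.+1]%SET != finset.set0 by apply/set0Pn; exists ord0; rewrite inE.
have [tau [c [p [_ ha hb _ hd]]]] := claim hsym hL hclose hcard hcl hne.
pose Wf := [tuple mkt (fun k => tnth (Wt P tau i) k - tnth c k) | i < n'.+1].
have tW : forall i k, tnth (tnth Wf i) k = tnth (Wt P tau i) k - tnth c k.
  by move=> i k; rewrite tnth_mktuple tnth_mkt.
have dW : forall i j, dist (tnth Wf i) (tnth Wf j) = dist (Wt P tau i) (Wt P tau j).
  by move=> i j; apply: dist_ext => k; rewrite !tW; ring.
have same : forall i j, connect close i j -> forall k,
    tnth (tnth Wf i) k - tnth (tnth Wf j) k = s * (tnth (tnth V0 i) k - tnth (tnth V0 j) k).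
  move=> i j hij k; rewrite !tW /Wt !tnth_mkt (ha i j) ?inE //; ring.
have far : forall i j, ~ connect close i j ->
    2 * r0 < dist (tnth V0 i) (tnth V0 j) /\ 2 * r < dist (tnth Wf i) (tnth Wf j).
  move=> i j hij; split.
    rewrite ltNge; apply/negP => hc; apply: hij; exact: connect1.
  rewrite dW; apply: lt_le_trans (hb i j _ _ _); rewrite ?inE //; last by apply/negP.
  by rewrite /L; nra.
exists Wf; split.
  move=> i.
  have -> : enorm (tnth Wf i) = dist (Wt P tau i) c.
    rewrite /enorm /dist /sqdist; apply: congr1; apply: eq_bigr => k _; by rewrite tW.
  apply: le_trans (hd i _) _; first by rewrite inE.
  rewrite cardsT card_ord.
  have hNr : n'.+1%:R * r = 1 by rewrite mulfV // pnatr_eq0.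
  have h : (n'.+1%:R - 1) * r = 1 - r by rewrite mulrBl hNr mul1r.
  rewrite /L.
  have -> : (n'.+1%:R - 1) * (r * (2 + r)) / 2 = (1 - r) * (2 + r) / 2 :> R.
    by rewrite mulrA h.
  have hr1 : r <= 1 by rewrite /r invf_le1 // ?ler1n ?ltr0n.
  nra.
exists f; split => // i j; rewrite -fiff; split.
  apply: (@transfer _ _ _ A Wf V0 r r0 (s^-1) (fun i j => connect close i j)).
  - by rewrite invr_gt0.
  - by [].
  - by rewrite -hsr mulKf // gt_eqF.
  - move=> i' j' hij k; rewrite same //; field.
    by apply/eqP => h0; move: hs; rewrite h0 ltxx.
  - by move=> i' j' /far [h1 h2].
apply: (@transfer _ _ _ A V0 Wf r0 r s (fun i j => connect close i j)).
- by [].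
- by [].
- by rewrite hsr.
- exact: same.
- exact: far.
Qed.
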